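(* Let $A$ be a fuzzy ideal of a fuzzy Riesz space $(E,\mu)$ and let $T:E\rightarrow E/A$, $Tf=[f]$, be the canonical projection, where $E/A$ carries the fuzzy order $\nu$ described in the context. Then $T$ is a fuzzy Riesz homomorphism.
   Context: A fuzzy order on a real vector space $E$ is a map $\mu:E\times E\to[0,1]$ with $\mu(x,x)=1$; $\mu(x,y)+\mu(y,x)>1$ implies $x=y$; and $\mu(x,z)\ge\sup_{y}\min(\mu(x,y),\mu(y,z))$. Write $x\le y$ for $\mu(x,y)>\frac12$; suprema/infima are taken with respect to this relation. $(E,\mu)$ is a fuzzy ordered linear space if $\mu(x_1,x_2)>\frac12$ implies $\mu(x_1,x_2)\le\mu(x_1+x,x_2+x)$ for all $x$ and $\mu(x_1,x_2)\le\mu(\alpha x_1,\alpha x_2)$ for all $\alpha>0$; it is a fuzzy Riesz space if $x\vee y=\sup\{x,y\}$ and $x\wedge y=\inf\{x,y\}$ exist for all $x,y$. $|x|=x\vee(-x)$. A fuzzy ideal is a vector subspace $A$ such that $\mu(|x|,|y|)>\frac12$ and $y\in A$ imply $x\in A$. For $f\in E$, $[f]=f+A$, $E/A$ is the quotient vector space, and $\nu([f],[g])=1$ if $[f]=[g]$; $\nu([f],[g])=\frac23$ if $[f]\ne[g]$ and there exist $f_1\in[f]$, $g_1\in[g]$ with $\mu(f_1,g_1)>\frac12$; $\nu([f],[g])=0$ otherwise. $(E/A,\nu)$ is a fuzzy Riesz space. A fuzzy Riesz homomorphism is a linear map with $T(x\vee y)=Tx\vee Ty$. *)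

(* Defs.v *)
From HB Require Import structures.
From mathcomp Require Import all_boot all_order all_algebra.
From mathcomp Require Import boolp classical_sets reals.
Set Implicit Arguments. Unset Strict Implicit. Unset Printing Implicit Defensive.
Import Order.TTheory GRing.Theory Num.Theory.
Local Open Scope ring_scope.
Local Open Scope classical_set_scope.

Section FuzzyDefs.
Variables (R : realType) (E : lmodType R).

Definition fuzzy_order (T : Type) (mu : T -> T -> R) : Prop :=
  (forall x y, 0 <= mu x y <= 1) /\
  (forall x, mu x x = 1) /\
  (forall x y, mu x y + mu y x > 1 -> x = y) /\
  (forall x y z, Num.min (mu x y) (mu y z) <= mu x z).

Definition fle (T : Type) (mu : T -> T -> R) (x y : T) : Prop := mu x y > 2^-1.

Definition is_sup2 (T : Type) (mu : T -> T -> R) (dom : set T) (s x y : T) :=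
  dom s /\ fle mu x s /\ fle mu y s /\
  (forall u, dom u -> fle mu x u -> fle mu y u -> fle mu s u).

Definition is_inf2 (T : Type) (mu : T -> T -> R) (dom : set T) (s x y : T) :=
  dom s /\ fle mu s x /\ fle mu s y /\
  (forall u, dom u -> fle mu u x -> fle mu u y -> fle mu u s).

Definition fuzzy_ordered_linear_space (mu : E -> E -> R) : Prop :=
  fuzzy_order mu /\
  (forall x1 x2, fle mu x1 x2 ->
     (forall x, mu x1 x2 <= mu (x1 + x) (x2 + x)) /\
     (forall a : R, 0 < a -> mu x1 x2 <= mu (a *: x1) (a *: x2))).

Definition fuzzy_riesz_space (mu : E -> E -> R) : Prop :=
  fuzzy_ordered_linear_space mu /\
  (forall x y, exists s, is_sup2 mu setT s x y) /\
  (forall x y, exists i, is_inf2 mu setT i x y).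

Definition subspace (A : set E) : Prop :=
  A 0 /\ (forall x y, A x -> A y -> A (x + y)) /\
  (forall (a : R) x, A x -> A (a *: x)).

(* |x| = x \/ (-x); since suprema are unique, "ax = |x|" is is_sup2 mu setT ax x (-x) *)
Definition fuzzy_ideal (mu : E -> E -> R) (A : set E) : Prop :=
  subspace A /\
  (forall x y ax ay, is_sup2 mu setT ax x (- x) -> is_sup2 mu setT ay y (- y) ->
     fle mu ax ay -> A y -> A x).

(* E/A : elements are the cosets [f] = f + A, represented as subsets of E *)
Definition coset (A : set E) (f : E) : set E := [set g | A (g - f)].
Definition quot (A : set E) : set (set E) := range (coset A).

Definition qadd (A : set E) (C D : set E) : set E :=
  [set g | exists c d, C c /\ D d /\ A (g - (c + d))].
Definition qscale (A : set E) (a : R) (C : set E) : set E :=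
  [set g | exists c, C c /\ A (g - a *: c)].

Definition nu (mu : E -> E -> R) (C D : set E) : R :=
  if pselect (C = D) then 1
  else if pselect (exists f1 g1, C f1 /\ D g1 /\ mu f1 g1 > 2^-1) then 2 / 3
  else 0.

End FuzzyDefs.

(* Main.v *)
Require Import Defs.
From HB Require Import structures.
From mathcomp Require Import all_boot all_order all_algebra.
From mathcomp Require Import boolp classical_sets reals.
From mathcomp Require Import lra.
Import Order.TTheory GRing.Theory Num.Theory.
Local Open Scope ring_scope.
Local Open Scope classical_set_scope.
Set Implicit Arguments.

Lemma half_lt1 (R : realType) : (2^-1 : R) < 1.
Proof. lra. Qed.

Lemma half_lt23 (R : realType) : (2^-1 : R) < 2 / 3.
Proof. lra. Qed.

Lemma fle_refl (R : realType) (T : Type) (mu : T -> T -> R) :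
  fuzzy_order mu -> forall a, fle mu a a.
Proof. move=> [_ [H _]] a; rewrite /fle H; exact: half_lt1. Qed.

Lemma fle_tr (R : realType) (T : Type) (mu : T -> T -> R) :
  fuzzy_order mu -> forall a b c, fle mu a b -> fle mu b c -> fle mu a c.
Proof.
move=> [_ [_ [_ Ht]]] a b c; rewrite /fle => hab hbc.
apply: lt_le_trans (Ht a b c); by rewrite lt_min hab hbc.
Qed.

Lemma fle_add (R : realType) (E : lmodType R) (mu : E -> E -> R) :
  fuzzy_ordered_linear_space mu -> forall a b x, fle mu a b -> fle mu (a + x) (b + x).
Proof.
move=> [_ H] a b x hab; have [h _] := H _ _ hab.
rewrite /fle; exact: lt_le_trans hab (h x).
Qed.

Lemma fle_scale (R : realType) (E : lmodType R) (mu : E -> E -> R) :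
  fuzzy_ordered_linear_space mu -> forall a b (r : R), 0 < r -> fle mu a b ->
  fle mu (r *: a) (r *: b).
Proof.
move=> [_ H] a b r hr hab; have [_ h] := H _ _ hab.
rewrite /fle; exact: lt_le_trans hab (h r hr).
Qed.

Lemma abs_ge0 (R : realType) (E : lmodType R) (mu : E -> E -> R) :
  fuzzy_ordered_linear_space mu -> forall a c, is_sup2 mu setT a c (- c) -> fle mu 0 a.
Proof.
move=> Hl a c [_ [hc [hn _]]].
have Ho := (proj1 Hl).
have h1 := fle_add Hl (- c) hc; rewrite subrr in h1.
have h2 := fle_add Hl a hn; rewrite addrC in h2.
have h3 := fle_tr Ho h1 h2.
have h4 := @fle_scale _ _ _ Hl _ _ (2^-1) ltac:(by rewrite invr_gt0) h3.
rewrite scaler0 in h4.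
have -> : a = 2^-1 *: (a + a) by rewrite -mulr2n -scaler_nat scalerA mulVf ?scale1r // pnatr_eq0.
exact: h4.
Qed.

Lemma absabs (R : realType) (E : lmodType R) (mu : E -> E -> R) :
  fuzzy_ordered_linear_space mu -> forall a c, is_sup2 mu setT a c (- c) ->
  is_sup2 mu setT a a (- a).
Proof.
move=> Hl a c hs; have h0 := abs_ge0 Hl hs.
split => //; split; first exact: (fle_refl (proj1 Hl)).
split; last by move=> u _ hu _.
have h := fle_add Hl (- a) h0; rewrite add0r subrr in h.
exact: (@fle_tr _ _ mu (proj1 Hl) _ _ _ h h0).
Qed.

Lemma A_opp (R : realType) (E : lmodType R) (A : set E) :
  subspace A -> forall x, A x -> A (- x).
Proof. move=> [_ [_ hs]] x hx; rewrite -scaleN1r; exact: hs. Qed.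

Lemma A_sub (R : realType) (E : lmodType R) (A : set E) :
  subspace A -> forall x y, A x -> A y -> A (x - y).
Proof. move=> hA x y hx hy; apply: hA.2.1 => //; exact: A_opp. Qed.

Lemma abs_in_A (R : realType) (E : lmodType R) (mu : E -> E -> R) (A : set E) :
  fuzzy_ordered_linear_space mu -> fuzzy_ideal mu A ->
  forall a c, is_sup2 mu setT a c (- c) -> A c -> A a.
Proof.
move=> Hl [_ HI] a c hs hc.
exact: (HI a c a a (absabs Hl hs) hs (fle_refl (proj1 Hl) a) hc).
Qed.

Lemma nu_fwd (R : realType) (E : lmodType R) (mu : E -> E -> R) (A : set E) :
  fuzzy_ordered_linear_space mu -> subspace A -> forall a b,
  fle (nu mu) (coset A a) (coset A b) -> exists c, A c /\ fle mu a (b + c).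
Proof.
move=> Hl hA a b; rewrite /fle /nu; case: pselect => [heq _|hne].
  have : coset A b a by rewrite -heq /coset /= subrr; exact: hA.1.
  rewrite /coset /= => h; exists (a - b); split => //.
  rewrite addrCA subrr addr0; exact: (fle_refl (proj1 Hl)).
destruct (pselect _) as [hex|hno]; last first.
  move=> h; exfalso; move: h; apply/negP; rewrite -leNgt; lra.
move=> _; case: hex => f1 [g1 [hf [hg hm]]].
rewrite /coset /= in hf hg.
exists ((g1 - b) - (f1 - a)); split; first exact: A_sub.
have h := fle_add Hl (a - f1) hm.
have e1 : f1 + (a - f1) = a by rewrite addrCA subrr addr0.
have e2 : g1 + (a - f1) = b + (g1 - b - (f1 - a)).
  by rewrite [in RHS]opprB [in RHS]addrA [b + _]addrCA subrr addr0.
rewrite e1 e2 in h.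
exact: h.
Qed.

Lemma nu_bwd (R : realType) (E : lmodType R) (mu : E -> E -> R) (A : set E) :
  subspace A -> forall a b c, A c -> fle mu a (b + c) ->
  fle (nu mu) (coset A a) (coset A b).
Proof.
move=> hA a b c hc hm; rewrite /fle /nu; destruct (pselect _) as [he1|hne].
  exact: half_lt1.
destruct (pselect _) as [he2|hno]; first exact: half_lt23.
exfalso; apply: hno; exists a, (b + c); split.
  by rewrite /coset /= subrr; exact: hA.1.
by split => //; rewrite /coset /= addrAC subrr add0r.
Qed.

Unset Implicit Arguments.

Theorem theorem3p6 (R : realType) (E : lmodType R) (mu : E -> E -> R) (A : set E) :
  fuzzy_riesz_space mu -> fuzzy_ideal mu A ->
  (* T f = [f] is linear *)
  (forall x y : E, coset A (x + y) = qadd A (coset A x) (coset A y)) /\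
  (forall (a : R) (x : E), coset A (a *: x) = qscale A a (coset A x)) /\
  (* T (x \/ y) = T x \/ T y, the join in E/A taken w.r.t. nu *)
  (forall x y s : E, is_sup2 mu setT s x y ->
     is_sup2 (nu mu) (quot A) (coset A s) (coset A x) (coset A y)).
Proof.
move=> [Hl [Hsup _]] HI; have hA := HI.1.
split.
  move=> x y; apply/seteqP; split => g; rewrite /coset /qadd /= => h.
    exists x, y; split; first by rewrite subrr; exact: hA.1.
    by split => //; rewrite subrr; exact: hA.1.
  case: h => c [d [hc [hd hg]]].
  rewrite -(subrKA (c + d)); apply: hA.2.1 => //.
  rewrite opprD addrACA; exact: hA.2.1.
split.
  move=> a x; apply/seteqP; split => g; rewrite /coset /qscale /= => h.
    by exists x; split => //; rewrite subrr; exact: hA.1.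
  case: h => c [hc hg].
  rewrite -(subrKA (a *: c)); apply: hA.2.1 => //.
  rewrite -scalerBr; exact: hA.2.2.
move=> x y s hs; have [_ [hxs [hys hl]]] := hs.
split; first by exists s.
split; first by apply: (@nu_bwd _ _ mu A hA _ _ 0); [exact: hA.1 | rewrite addr0].
split; first by apply: (@nu_bwd _ _ mu A hA _ _ 0); [exact: hA.1 | rewrite addr0].
move=> U [u _ <-] hxu hyu.
have [c1 [hc1 h1]] := nu_fwd Hl hA hxu.
have [c2 [hc2 h2]] := nu_fwd Hl hA hyu.
have [a1 ha1] := Hsup c1 (- c1).
have [a2 ha2] := Hsup c2 (- c2).
have hA1 := abs_in_A Hl HI ha1 hc1.
have hA2 := abs_in_A Hl HI ha2 hc2.
have g1 := abs_ge0 Hl ha1.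
have g2 := abs_ge0 Hl ha2.
have k1 : fle mu c1 (a1 + a2).
  apply: (@fle_tr _ _ mu (proj1 Hl) _ _ _) ha1.2.1 _.
  have := fle_add Hl a1 g2; by rewrite add0r addrC.
have k2 : fle mu c2 (a1 + a2).
  apply: (@fle_tr _ _ mu (proj1 Hl) _ _ _) ha2.2.1 _.
  have := fle_add Hl a2 g1; by rewrite add0r.
have m1 : fle mu x (u + (a1 + a2)).
  apply: (@fle_tr _ _ mu (proj1 Hl) _ _ _) h1 _.
  have := fle_add Hl u k1; by rewrite addrC [_ + u]addrC.
have m2 : fle mu y (u + (a1 + a2)).
  apply: (@fle_tr _ _ mu (proj1 Hl) _ _ _) h2 _.
  have := fle_add Hl u k2; by rewrite addrC [_ + u]addrC.
apply: (@nu_bwd _ _ mu A hA _ _ (a1 + a2)); first exact: hA.2.1.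
exact: hl.
Qed.
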